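(* Let $k=3$ and $\alpha=(\tfrac12,\tfrac13,\tfrac15)$. Then every $\alpha$-communal triple is (uniquely) a nonnegative integer combination of $[7,5,3]$, $[5,3,2]$, $[3,2,1]$, and the number $f(g)$ of $\alpha$-communal triples with entries summing to $g$ satisfies \[ \sum_{g\ge0}f(g)x^g=\frac{1}{(1-x^{15})(1-x^{10})(1-x^{6})},\qquad f(g)=\binom{\lfloor g/2\rfloor+\lfloor g/3\rfloor+\lfloor g/5\rfloor-g+2}{2}. \]
   Context: A triple $[g_1,g_2,g_3]$ of integers is $\alpha$-communal if $0\le g_i\le\alpha_i(g_1+g_2+g_3)$ for $i=1,2,3$. Binomial coefficients $\binom{n}{r}$ are $0$ for $0\le n<r$. *)

(* Defs.v *)
From HB Require Import structures.
From mathcomp Require Import all_boot all_order all_algebra.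
Set Implicit Arguments. Unset Strict Implicit. Unset Printing Implicit Defensive.
Import Order.TTheory GRing.Theory Num.Theory.

Local Open Scope ring_scope.

Definition itriple := (int * int * int)%type.

Definition communal (a : rat * rat * rat) (g : itriple) : bool :=
  let: ((g1, g2), g3) := g in
  let: ((a1, a2), a3) := a in
  let s : rat := (g1 + g2 + g3)%:~R in
  [&& 0 <= g1, g1%:~R <= a1 * s,
      0 <= g2, g2%:~R <= a2 * s,
      0 <= g3 & g3%:~R <= a3 * s].

Definition alpha : rat * rat * rat := (1 / 2%:R, 1 / 3%:R, 1 / 5%:R).

Definition tsum (g : itriple) : int := g.1.1 + g.1.2 + g.2.

Definition comb (abc : nat * nat * nat) : itriple :=
  let: ((a, b), c) := abc in
  (((7 * a + 5 * b + 3 * c)%N : int),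
   ((5 * a + 3 * b + 2 * c)%N : int),
   ((3 * a + 2 * b + c)%N : int)).

(* f(g) = number of alpha-communal triples with entries summing to g.
   Any such triple has entries in [0, g], so enumerating those suffices. *)
Definition f (g : nat) : nat :=
  count (fun t => communal alpha t && (tsum t == g%:Z))
    [seq ((xy.1%:Z, xy.2%:Z), z%:Z)
       | xy <- [seq (x, y) | x <- iota 0 g.+1, y <- iota 0 g.+1],
         z <- iota 0 g.+1].

Definition gf_trunc (N : nat) : {poly int} := \poly_(i < N.+1) (f i)%:R.

Definition denom : {poly int} := (1 - 'X^15) * (1 - 'X^10) * (1 - 'X^6).

(* Main.v *)
Require Import Defs.
From HB Require Import structures.
From mathcomp Require Import all_boot all_order all_algebra.
From mathcomp Require Import ring lra zify.
Import Order.TTheory GRing.Theory Num.Theory.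
Definition T3 n : seq (nat * nat * nat) :=
  [seq (xy, z) | xy <- [seq (x, y) | x <- iota 0 n, y <- iota 0 n], z <- iota 0 n].
Local Open Scope ring_scope.
Definition Ls (g : nat) : seq itriple :=
  [seq ((xy.1%:Z, xy.2%:Z), z%:Z)
       | xy <- [seq (x, y) | x <- iota 0 g.+1, y <- iota 0 g.+1],
         z <- iota 0 g.+1].
Local Close Scope ring_scope.



Lemma uniq2 n : uniq [seq (x, y) | x <- iota 0 n, y <- iota 0 n].
Proof. apply: allpairs_uniq; rewrite ?iota_uniq //; by move=> [? ?] [? ?]. Qed.

Lemma uniq_T3 n : uniq (T3 n).
Proof. apply: allpairs_uniq; rewrite ?iota_uniq ?uniq2 //; by move=> [? ?] [? ?]. Qed.

Lemma uniq_Ls n : uniq (Ls n).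
Proof.
apply: allpairs_uniq; rewrite ?iota_uniq ?uniq2 //.
by move=> [[a b] c] [[a' b'] c'] _ _ /= [-> -> ->].
Qed.

Lemma mem2 n p : (p \in [seq (x, y) | x <- iota 0 n, y <- iota 0 n]) = (p.1 < n) && (p.2 < n).
Proof.
apply/allpairsP/andP.
  by case=> [[x y] [/= hx hy ->]]; move: hx hy; rewrite !mem_iota.
case=> h1 h2; exists p; rewrite !mem_iota; by case: p h1 h2.
Qed.

Lemma mem_T3 n u : (u \in T3 n) = [&& u.1.1 < n, u.1.2 < n & u.2 < n].
Proof.
apply/allpairsP/and3P.
  by case=> [[xy z] [/= hx hy ->]]; move: hx hy; rewrite mem2 mem_iota => /andP[-> ->].
case=> h1 h2 h3; exists u; rewrite mem2 mem_iota h1 h2 h3; by case: u {h1 h2 h3} => [[]].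
Qed.

Lemma mem_Ls g x : x \in Ls g <-> exists a b c, [/\ a <= g, b <= g, c <= g & x = ((Posz a, Posz b), Posz c)].
Proof.
split.
  case/allpairsP=> [[[a b] c] [hab hc ->]]; move: hab hc; rewrite mem2 mem_iota /= => /andP[ha hb] hc.
  by exists a, b, c.
case=> a [b [c [ha hb hc ->]]]; apply/allpairsP; exists ((a, b), c).
by rewrite mem2 mem_iota /= !ltnS ha hb hc.
Qed.
Lemma count_bij (T U : eqType) (P : pred T) (Q : pred U) (s : seq T) (t : seq U) (phi : U -> T) :
  uniq s -> uniq t ->
  (forall u v, u \in t -> Q u -> v \in t -> Q v -> phi u = phi v -> u = v) ->
  (forall u, u \in t -> Q u -> phi u \in s /\ P (phi u)) ->
  (forall x, x \in s -> P x -> exists2 u, u \in t & Q u /\ phi u = x) ->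
  count P s = count Q t.
Proof.
move=> us ut inj fw bw.
rewrite -!size_filter -(size_map phi).
apply: perm_size; apply: uniq_perm.
- exact: filter_uniq.
- rewrite map_inj_in_uniq ?filter_uniq //.
  move=> u v; rewrite !mem_filter => /andP[qu tu] /andP[qv tv]; exact: inj.
move=> x; rewrite mem_filter; apply/andP/mapP.
  case=> px sx; have [u tu [qu <-]] := bw x sx px.
  by exists u => //; rewrite mem_filter qu.
case=> u; rewrite mem_filter => /andP[qu tu] ->.
by have [h1 h2] := fw u tu qu; split.
Qed.
Local Open Scope ring_scope.
Lemma key (u s : int) (k : nat) : (0 < k)%N ->
  ((u%:~R : rat) <= 1 / k%:R * s%:~R) = (u * k%:Z <= s).
Proof.
move=> hk; rewrite mul1r ler_pdivlMl ?ltr0n //.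
by rewrite -[k%:R]/((k%:Z)%:~R : rat) -intrM ler_int mulrC.
Qed.

Lemma communalE (x y z : int) : communal alpha ((x, y), z) =
  [&& 0 <= x, x * 2 <= x + y + z, 0 <= y, y * 3 <= x + y + z, 0 <= z & z * 5 <= x + y + z].
Proof. by rewrite /communal /alpha !key. Qed.

Lemma communalN (x y z : nat) : communal alpha ((x%:Z, y%:Z), z%:Z) =
  [&& (x * 2 <= x + y + z)%N, (y * 3 <= x + y + z)%N & (z * 5 <= x + y + z)%N].
Proof. rewrite communalE -!PoszM -!PoszD !lez_nat /=. done. Qed.

Lemma f_Ls g : f g = count (fun t => communal alpha t && (tsum t == g%:Z)) (Ls g).
Proof. by []. Qed.
Local Close Scope ring_scope.
Lemma count_allpairs (S T R : eqType) (f : S -> T -> R) (p : pred R) s t :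
  count p [seq f x y | x <- s, y <- t] = \sum_(x <- s) count (fun y => p (f x y)) t.
Proof.
rewrite -sum1_count big_mkcond big_allpairs_dep /=.
apply: eq_bigr => x _. by rewrite -sum1_count [RHS]big_mkcond.
Qed.

Lemma cnt_eq k e n : count (fun z => k + z == e) (iota 0 n) = ((k <= e) && (e - k < n)).
Proof.
elim: n => [|n IH]; first by rewrite /= andbF.
rewrite -addn1 iotaD count_cat IH /= add0n addn0.
case: (leqP k e) => h /=.
  case: (ltnP (e - k) n) => h2 /=.
    have -> : (k + n == e) = false by apply/eqP; lia.
    have -> : e - k < n + 1 by lia. done.
  case: (eqVneq (k+n) e) => h3 /=.
    have -> : e - k < n + 1 by lia. done.
  have -> : e - k < n + 1 = false by apply/negbTE; lia. done.
have -> : (k + n == e) = false by apply/eqP; lia. done.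
Qed.

Lemma cnt_le k e n : e < k + n -> count (fun y => k + y <= e) (iota 0 n) = e.+1 - k.
Proof.
elim: n => [|n IH] h; first by rewrite /=; lia.
rewrite -addn1 iotaD count_cat /= add0n addn0.
case: (ltnP e (k + n)) => h2.
  by rewrite IH // addn0.
have he : e = k + n by lia. rewrite he.
have -> : count (fun y => k + y <= k + n) (iota 0 n) = n.
  rewrite (eq_in_count (a2 := predT)); first by rewrite count_predT size_iota.
  move=> y; rewrite mem_iota => hy /=; lia.
change (nat_of_bool true) with 1. lia.
Qed.

Lemma sum_tri e n : \sum_(x <- iota 0 n) (e.+1 - x) + 'C(e.+2 - n, 2) = 'C(e.+2, 2).
Proof.
elim: n => [|n IH]; first by rewrite big_nil.
rewrite -addn1 iotaD big_cat big_seq1 /= add0n -IH.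
case: (leqP n e.+1) => h.
  have -> : e.+2 - n = (e.+2 - (n+1)).+1 by lia.
  rewrite binS bin1. have -> : e.+2 - (n+1) = e.+1 - n by lia. lia.
have -> : e.+2 - n = 0 by lia. have -> : e.+2 - (n+1) = 0 by lia.
have -> : e.+1 - n = 0 by lia. lia.
Qed.


Lemma simplex e n : e < n ->
  count (fun u : nat * nat * nat => u.1.1 + u.1.2 + u.2 == e) (T3 n) = 'C(e.+2, 2).
Proof.
move=> hn; rewrite /T3 count_allpairs big_allpairs /=.
under eq_bigr do under eq_bigr do rewrite cnt_eq.
rewrite -(sum_tri e n).
have -> : 'C(e.+2 - n, 2) = 0 by rewrite bin_small //; lia.
rewrite addn0; apply: eq_big_seq => x; rewrite mem_iota => hx.
rewrite -(@cnt_le x e n); last lia.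
rewrite -sum1_count [RHS]big_mkcond /=; apply: eq_big_seq => y; rewrite mem_iota => hy.
case: (leqP (x + y) e) => h /=.
  have -> : e - (x + y) < n by lia. done.
done.
Qed.

Lemma part3 g : f g = 'C(g %/ 2 + g %/ 3 + g %/ 5 + 2 - g, 2).
Proof.
rewrite f_Ls.
case: (leqP g (g %/ 2 + g %/ 3 + g %/ 5)) => hg.
  have -> : g %/ 2 + g %/ 3 + g %/ 5 + 2 - g = (g %/ 2 + g %/ 3 + g %/ 5 - g).+2 by lia.
  rewrite -(@simplex _ g.+1); last lia.
  apply: (@count_bij _ _ _ _ _ _ (fun u => ((Posz (g %/ 2 - u.1.1), Posz (g %/ 3 - u.1.2)), Posz (g %/ 5 - u.2)))).
  - exact: uniq_Ls.
  - exact: uniq_T3.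
  - move=> [[a b] c] [[a' b'] c']; rewrite !mem_T3 /= => /and3P[h1 h2 h3] /eqP q /and3P[h1' h2' h3'] /eqP q' [e1 e2 e3].
    congr (_, _, _); lia.
  - move=> [[a b] c]; rewrite mem_T3 => /and3P[/= h1 h2 h3] /eqP /= q; split.
      apply/mem_Ls; do 3 eexists; split; [| | | reflexivity]; lia.
    have H : communal alpha ((Posz (g %/ 2 - a), Posz (g %/ 3 - b)), Posz (g %/ 5 - c)) &&
      (tsum ((Posz (g %/ 2 - a), Posz (g %/ 3 - b)), Posz (g %/ 5 - c)) == Posz g); last exact: H.
    rewrite communalN /tsum /= -!PoszD eqz_nat.
    apply/andP; split; [apply/and3P; split|apply/eqP]; lia.
  - move=> x /mem_Ls [a [b [c [ha hb hc ->]]]] hP.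
    have : communal alpha ((Posz a, Posz b), Posz c) && (tsum ((Posz a, Posz b), Posz c) == Posz g) := hP.
    rewrite communalN /tsum /= -!PoszD eqz_nat => /andP[/and3P[h1 h2 h3] /eqP hs].
    exists ((g %/ 2 - a, g %/ 3 - b), g %/ 5 - c).
      rewrite mem_T3 /=; apply/and3P; split; lia.
    split; first by rewrite /=; apply/eqP; lia.
    rewrite /=; congr (_, _, _); lia.
rewrite bin_small; last lia.
rewrite -(count_pred0 ([::] : seq nat)).
apply: (@count_bij _ _ _ _ _ _ (fun _ => ((Posz 0, Posz 0), Posz 0))) => //.
  exact: uniq_Ls.
move=> x /mem_Ls [a [b [c [ha hb hc ->]]]] hP.
have : communal alpha ((Posz a, Posz b), Posz c) && (tsum ((Posz a, Posz b), Posz c) == Posz g) := hP.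
rewrite communalN /tsum /= -!PoszD eqz_nat => /andP[/and3P[h1 h2 h3] /eqP hs].
exfalso; lia.
Qed.

Local Open Scope ring_scope.
Definition Fm (g:nat) := 'C(g %/ 2 + g %/ 3 + g %/ 5 + 2 - g, 2)%N.
Definition Hm (g:nat) := (g %/ 2 + g %/ 3 + g %/ 5 + 2 - g)%N.
Definition cF (j:nat) : int := (Fm j)%:Z.
Definition cH (j:nat) : int := (Hm j)%:Z.
Definition sh k (c : nat -> int) i := if (i < k)%N then 0 else c (i - k)%N.
Definition E (c : nat -> int) i := c i - sh 6 c i - sh 10 c i - sh 15 c i + sh 16 c i + sh 21 c i + sh 25 c i - sh 31 c i.

Lemma smallF : all (fun i => E cF i == (i==0)%:R) (iota 0 61). Proof. by vm_compute. Qed.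
Lemma smallH : all (fun i => E cH i == 0) (iota 31 30). Proof. by vm_compute. Qed.

Lemma Hm30 g : Hm (g + 30) = (Hm g).+1. Proof. rewrite /Hm. lia. Qed.
Lemma Fm30 g : Fm (g + 30) = (Fm g + Hm g)%N.
Proof. by rewrite /Fm -/(Hm (g+30)) -/(Hm g) Hm30 binS bin1. Qed.

Lemma E_ext c d i : (forall j, c j = d j) -> E c i = E d i.
Proof. by move=> h; rewrite /E /sh !h. Qed.

Lemma sh_add k c d i : sh k (fun j => c j + d j) i = sh k c i + sh k d i.
Proof. by rewrite /sh; case: ifP; rewrite ?addr0. Qed.

Lemma E_add c d i : E (fun j => c j + d j) i = E c i + E d i.
Proof. rewrite /E !sh_add; ring. Qed.

Lemma E_shift c i : (31 <= i)%N -> E c (i + 30) = E (fun j => c (j + 30)%N) i.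
Proof.
move=> hi; rewrite /E /sh.
have L : forall k, (k <= 31)%N -> (i + 30 < k)%N = false /\ (i < k)%N = false /\ (i + 30 - k = i - k + 30)%N.
  move=> k hk; split; [|split]; apply/eqP; lia.
have [a1 [a2 a3]] := L 6 isT. have [b1 [b2 b3]] := L 10 isT.
have [c1 [c2 c3]] := L 15 isT. have [d1 [d2 d3]] := L 16 isT.
have [e1 [e2 e3]] := L 21 isT. have [f1 [f2 f3]] := L 25 isT.
have [g1 [g2 g3]] := L 31 isT.
by rewrite a1 a2 a3 b1 b2 b3 c1 c2 c3 d1 d2 d3 e1 e2 e3 f1 f2 f3 g1 g2 g3.
Qed.

Lemma E_one i : (31 <= i)%N -> E (fun _ => 1) i = 0.
Proof.
move=> hi; rewrite /E /sh.
have L : forall k, (k <= 31)%N -> (i < k)%N = false by move=> k hk; apply/eqP; lia.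
rewrite !L //; ring.
Qed.

Lemma EH i : (31 <= i)%N -> E cH i = 0.
Proof.
move=> hi.
have : forall n i, (31 <= i)%N -> (i < n)%N -> E cH i = 0; last by move/(_ i.+1 i hi (ltnSn i)).
elim=> [//|n IH] j hj jn.
have [j61|j61] := ltnP j 61.
  by apply/eqP; move/allP: smallH; apply; rewrite mem_iota; lia.
have -> : j = (j - 30 + 30)%N by lia.
rewrite E_shift; last lia.
rewrite (@E_ext _ (fun k => cH k + 1)); last by move=> k; rewrite /cH Hm30 -addn1 PoszD.
rewrite E_add E_one; last lia.
rewrite IH; [by rewrite addr0 | lia | lia].
Qed.

Lemma EF i : E cF i = (i == 0)%:R.
Proof.
have : forall n i, (i < n)%N -> E cF i = (i==0)%:R; last by move/(_ i.+1 i (ltnSn i)).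
elim=> [//|n IH] j jn.
have [j61|j61] := ltnP j 61.
  by apply/eqP; move/allP: smallF; apply; rewrite mem_iota; lia.
have -> : j = (j - 30 + 30)%N by lia.
rewrite E_shift; last lia.
rewrite (@E_ext _ (fun k => cF k + cH k)); last by move=> k; rewrite /cF /cH Fm30 PoszD.
rewrite E_add EH; last lia.
rewrite IH; last lia. rewrite addr0.
have -> : (j - 30 == 0)%N = false by apply/eqP; lia.
have -> : (j - 30 + 30 == 0)%N = false by apply/eqP; lia.
done.
Qed.
Lemma part1 g : communal alpha g -> exists! abc : nat * nat * nat, g = comb abc.
Proof.
case: g => [[x y] z]; rewrite communalE => /andP [h1 /andP [h2 /andP [h3 /andP [h4 /andP [h5 h6]]]]].
exists ((`|(y + z - x)%R|%N, `|(x + z - y * 2)%R|%N), `|(x + y - z * 4)%R|%N); split.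
  rewrite /comb; congr (_, _, _); lia.
case=> [[a b] c]; rewrite /comb => [[e1 e2 e3]].
congr (_, _, _); lia.
Qed.

Lemma dd : denom = 1 - 'X^6 - 'X^10 - 'X^15 + 'X^16 + 'X^21 + 'X^25 - 'X^31.
Proof. rewrite /denom. ring. Qed.

Definition cf (j : nat) : int := (f j)%:R.

Lemma coef_gf N j : (j <= N)%N -> (gf_trunc N)`_j = cf j.
Proof. by move=> hj; rewrite /gf_trunc coef_poly ltnS hj. Qed.

Lemma coef_sh N k i : (i <= N)%N -> ('X^k * gf_trunc N)`_i = sh k cf i.
Proof.
move=> hi; rewrite coefXnM /sh; case: ifP => // _; apply: coef_gf; lia.
Qed.

Lemma part2 N i : (i <= N)%N -> (denom * gf_trunc N)`_i = ((i == 0%N)%:R : int).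
Proof.
move=> hi; rewrite dd.
rewrite !(mulrBl, mulrDl) mul1r !(coefB, coefD) !coef_sh // coef_gf //.
rewrite -EF -/(E cf i); apply: E_ext => j.
by rewrite /cf /cF part3 natz.
Qed.

Theorem mainTheorem9 :
  (forall g : itriple, communal alpha g ->
     exists! abc : nat * nat * nat, g = comb abc)
  /\
  (* formal power series identity  denom * (sum_g f(g) x^g) = 1,
     checked coefficientwise on all truncations *)
  (forall N i : nat, (i <= N)%N ->
     (denom * gf_trunc N)`_i = ((i == 0%N)%:R : int))
  /\
  (forall g : nat,
     f g = 'C(g %/ 2 + g %/ 3 + g %/ 5 + 2 - g, 2)%N).
Proof.
split; first exact: part1.
split; first exact: part2.
exact: part3.
Qed.
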